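(* Let $n\ge0$ and let $I$ be one of the sets $\{a^nb,a\}$, $\{a^nb,b\}$, $\{b^na,a\}$, $\{b^na,b\}$, $\{ba^n,a\}$, $\{ba^n,b\}$, $\{ab^n,a\}$, $\{ab^n,b\}$, $\{a^nb,a^n\}$, $\{ba^n,a^n\}$, $\{b^na,b^n\}$, $\{ab^n,b^n\}$. Then $\vdash_I^*$ is a well quasi-order on $L^{\epsilon}_{\vdash_I}$.
   Context: For words $u,v$, the shuffle $u \sqcup\!\sqcup v$ is the set of all words $u_1v_1\cdots u_kv_k$ with $k\ge 1$, $u=u_1\cdots u_k$, $v=v_1\cdots v_k$ (pieces possibly empty). For a finite set $I$ of words, $v \vdash_I w$ means $w \in v \sqcup\!\sqcup u$ for some $u\in I$; $\vdash_I^*$ is its reflexive-transitive closure and $L^{\epsilon}_{\vdash_I}=\{w : \epsilon \vdash_I^* w\}$. A quasi-order $\le$ on $S$ is a well quasi-order iff every infinite sequence $s_1,s_2,\dots$ in $S$ has $i<j$ with $s_i\le s_j$. *)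

(* Defs.v *)
From Stdlib Require Import List Arith Relations.
Import ListNotations.

Inductive letter : Type := a | b.
Definition word := list letter.

Definition pw (x : letter) (n : nat) : word := repeat x n.

(* w ∈ u ⧢ v : w = u1 v1 ... uk vk with k >= 1, u = u1...uk, v = v1...vk
   (pieces possibly empty); the list ps is [(u1,v1);...;(uk,vk)]. *)
Definition shuffle (u v w : word) : Prop :=
  exists ps : list (word * word),
    ps <> [] /\
    u = concat (map fst ps) /\
    v = concat (map snd ps) /\
    w = concat (map (fun p => fst p ++ snd p) ps).

Definition step (I : list word) (v w : word) : Prop :=
  exists u, In u I /\ shuffle v u w.

Definition star (I : list word) : word -> word -> Prop :=
  clos_refl_trans word (step I).

Definition Leps (I : list word) (w : word) : Prop := star I [] w.

Definition wqo {X : Type} (S : X -> Prop) (le : X -> X -> Prop) : Prop :=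
  forall s : nat -> X, (forall i, S (s i)) ->
    exists i j, i < j /\ le (s i) (s j).

Definition Isets (n : nat) : list (list word) :=
  [ [pw a n ++ [b]; [a]];
    [pw a n ++ [b]; [b]];
    [pw b n ++ [a]; [a]];
    [pw b n ++ [a]; [b]];
    [[b] ++ pw a n; [a]];
    [[b] ++ pw a n; [b]];
    [[a] ++ pw b n; [a]];
    [[a] ++ pw b n; [b]];
    [pw a n ++ [b]; pw a n];
    [[b] ++ pw a n; pw a n];
    [pw b n ++ [a]; pw b n];
    [[a] ++ pw b n; pw b n] ].

(* Main.v *)
Require Import Defs.
From Stdlib Require Import List Arith Relations Lia ZArith Classical ClassicalEpsilon.
Import ListNotations.

Inductive sh : word -> word -> word -> Prop :=
| sh_nil : sh [] [] []
| sh_l : forall c u v w, sh u v w -> sh (c::u) v (c::w)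
| sh_r : forall c u v w, sh u v w -> sh u (c::v) (c::w).

Lemma sh_app : forall u1 v1 w1 u2 v2 w2, sh u1 v1 w1 -> sh u2 v2 w2 ->
  sh (u1++u2) (v1++v2) (w1++w2).
Proof. intros u1 v1 w1 u2 v2 w2 H H2; induction H; simpl; try constructor; auto. Qed.

Lemma sh_nil_l : forall v, sh [] v v.
Proof. induction v; constructor; auto. Qed.
Lemma sh_nil_r : forall v, sh v [] v.
Proof. induction v; constructor; auto. Qed.

Lemma shuffle_sh : forall u v w, shuffle u v w <-> sh u v w.
Proof.
  split.
  - intros [ps [_ [Hu [Hv Hw]]]]; subst. induction ps as [|[x y] ps IH]; simpl.
    + constructor.
    + rewrite <- !app_assoc. apply (sh_app x [] x (concat (map fst ps)) (y ++ concat (map snd ps)) (y ++ concat (map (fun p => fst p ++ snd p) ps))).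
      apply sh_nil_r. apply (sh_app [] y y). apply sh_nil_l. auto.
  - intros H; induction H.
    + exists [([],[])]; simpl; repeat split; congruence.
    + destruct IHsh as [ps [Hne [Hu [Hv Hw]]]]. exists (([c],[]) :: ps); simpl; repeat split; subst; try congruence.
    + destruct IHsh as [ps [Hne [Hu [Hv Hw]]]]. exists (([],[c]) :: ps); simpl; repeat split; subst; try congruence.
Qed.

Lemma sh_mid : forall y p q, sh y (p ++ q) (p ++ y ++ q).
Proof.
  intros. pose proof (sh_app [] p p (y++[]) ([] ++ q) (y ++ q) (sh_nil_l p)
     (sh_app y [] y [] q q (sh_nil_r y) (sh_nil_l q))) as H.
  rewrite app_nil_r in H. exact H.
Qed.

Lemma sh_lift : forall u v w p q, sh u v w -> sh (p++u++q) v (p++w++q).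
Proof.
  intros. pose proof (sh_app p [] p (u++q) (v++[]) (w++q) (sh_nil_r p)
     (sh_app u v w q [] q H (sh_nil_r q))) as H'.
  rewrite app_nil_r in H'. exact H'.
Qed.

Lemma sh_rev : forall u v w, sh u v w -> sh (rev u) (rev v) (rev w).
Proof.
  intros u v w H; induction H; simpl.
  - constructor.
  - pose proof (sh_app _ _ _ [c] [] [c] IHsh (sh_l c _ _ _ sh_nil)) as H'. rewrite app_nil_r in H'. exact H'.
  - pose proof (sh_app _ _ _ [] [c] [c] IHsh (sh_r c _ _ _ sh_nil)) as H'. rewrite app_nil_r in H'. exact H'.
Qed.

Lemma sh_map : forall f u v w, sh u v w -> sh (map f u) (map f v) (map f w).
Proof. intros f u v w H; induction H; simpl; constructor; auto. Qed.

Lemma step_sh : forall I v w, step I v w <-> exists u, In u I /\ sh v u w.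
Proof.
  unfold step; split; intros [u [H1 H2]]; exists u; split; auto; apply shuffle_sh; auto.
Qed.

Lemma star_lift : forall I u w p q, star I u w -> star I (p++u++q) (p++w++q).
Proof.
  intros I u w p q H; induction H.
  - apply rt_step. apply step_sh in H. destruct H as [u [Hu Hs]].
    apply step_sh. exists u. split; auto. apply sh_lift; auto.
  - apply rt_refl.
  - eapply rt_trans; eauto.
Qed.

Lemma star_app : forall I u u' v v', star I u u' -> star I v v' -> star I (u++v) (u'++v').
Proof.
  intros. apply rt_trans with (u' ++ v).
  - pose proof (star_lift I u u' [] v H) as H1; simpl in H1; exact H1.
  - pose proof (star_lift I v v' u' [] H0) as H1; rewrite !app_nil_r in H1; exact H1.
Qed.

Lemma step_mid : forall I y p q, In (p++q) I -> step I y (p++y++q).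
Proof. intros. apply step_sh. exists (p++q). split; auto. apply sh_mid. Qed.

Lemma star_transport : forall (f : word -> word) I u w,
  (forall u v w, sh u v w -> sh (f u) (f v) (f w)) ->
  star I u w -> star (map f I) (f u) (f w).
Proof.
  intros f I u w Hf H; induction H.
  - apply rt_step. apply step_sh in H. destruct H as [u [Hu Hs]].
    apply step_sh. exists (f u). split. apply in_map; auto. apply Hf; auto.
  - apply rt_refl.
  - eapply rt_trans; eauto.
Qed.

Lemma wqo_transport : forall (f : word -> word) I,
  (forall u v w, sh u v w -> sh (f u) (f v) (f w)) ->
  (forall x, f (f x) = x) -> f [] = [] ->
  wqo (Leps I) (star I) -> wqo (Leps (map f I)) (star (map f I)).
Proof.
  intros f I Hf Hinv Hnil H s Hs.
  assert (HI : map f (map f I) = I).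
  { rewrite map_map. erewrite map_ext. apply map_id. intros; apply Hinv. }
  destruct (H (fun i => f (s i))) as [i [j [Hij Hle]]].
  - intros i. unfold Leps. rewrite <- HI, <- Hnil. apply star_transport; auto. apply Hs.
  - exists i, j. split; auto. rewrite <- (Hinv (s i)), <- (Hinv (s j)). apply star_transport; auto.
Qed.

Lemma subseq_lemma : forall (P : nat -> Prop), (forall N, exists i, N <= i /\ P i) ->
  exists phi : nat -> nat, (forall k, phi k < phi (S k)) /\ forall k, P (phi k).
Proof.
  intros P H.
  set (nxt := fun N => proj1_sig (constructive_indefinite_description _ (H N))).
  assert (Hn : forall N, N <= nxt N /\ P (nxt N)).
  { intro N. unfold nxt. destruct (constructive_indefinite_description _ (H N)); simpl; auto. }
  exists (nat_rect (fun _ => nat) (nxt 0) (fun _ r => nxt (S r))).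
  split.
  - intro k. simpl. destruct (Hn (S (nat_rect (fun _ => nat) (nxt 0) (fun _ r => nxt (S r)) k))). lia.
  - intro k. destruct k; simpl; apply Hn.
Qed.

Lemma incr_mono : forall phi : nat -> nat, (forall k, phi k < phi (S k)) -> forall k l, k < l -> phi k < phi l.
Proof.
  intros phi H k l Hkl. induction l. lia.
  destruct (Nat.eq_dec k l). subst; auto. specialize (H l). assert (k < l) by lia. specialize (IHl H0). lia.
Qed.

Lemma not_wqo_bad : forall {X} (S : X -> Prop) le, ~ wqo S le ->
  exists s, (forall i, S (s i)) /\ forall i j, i < j -> ~ le (s i) (s j).
Proof.
  intros X S le H. unfold wqo in H. apply not_all_ex_not in H. destruct H as [s H].
  exists s. apply imply_to_and in H. destruct H as [H1 H2]. split; auto.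
  intros i j Hij Hle. apply H2. exists i, j; auto.
Qed.

Lemma minex : forall {X} (Q : X -> Prop) (size : X -> nat), (exists x, Q x) ->
  exists x, Q x /\ forall y, Q y -> size x <= size y.
Proof.
  intros X Q size [x Hx].
  remember (size x) as k. revert x Hx Heqk.
  induction k as [k IH] using (well_founded_induction lt_wf).
  intros x Hx Hk.
  destruct (classic (forall y, Q y -> size x <= size y)) as [H|H].
  - exists x; auto.
  - apply not_all_ex_not in H. destruct H as [y H]. apply imply_to_and in H. destruct H as [Hy H].
    apply (IH (size y)) with (x := y); auto. lia.
Qed.

Section Chain.
Variable X : Type.
Variable SS : X -> Prop.
Variable le : X -> X -> Prop.
Hypothesis trans : forall x y z, le x y -> le y z -> le x z.

Lemma chain_lemma : wqo SS le -> forall s, (forall i, SS (s i)) ->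
  exists phi, (forall k, phi k < phi (Datatypes.S k)) /\ forall k l, k < l -> le (s (phi k)) (s (phi l)).
Proof.
  intros W s Hs.
  set (term := fun i => forall j, i < j -> ~ le (s i) (s j)).
  destruct (classic (forall N, exists i, N <= i /\ term i)) as [H|H].
  - destruct (subseq_lemma _ H) as [phi [Hphi Ht]].
    exfalso. destruct (W (fun k => s (phi k))) as [k [l [Hkl Hle]]]. intro; auto.
    apply (Ht k (phi l)); auto. apply incr_mono; auto.
  - apply not_all_ex_not in H. destruct H as [N H].
    assert (H' : forall i, exists j, N <= i -> i < j /\ le (s i) (s j)).
    { intro i. destruct (le_lt_dec N i).
      - assert (~ term i) by (intro; apply H; exists i; auto).
        unfold term in H0. apply not_all_ex_not in H0. destruct H0 as [j H0].
        apply imply_to_and in H0. destruct H0. apply NNPP in H1. exists j; auto.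
      - exists 0. intro; lia. }
    set (nx := fun i => proj1_sig (constructive_indefinite_description _ (H' i))).
    assert (Hnx : forall i, N <= i -> i < nx i /\ le (s i) (s (nx i))).
    { intro i. unfold nx. destruct (constructive_indefinite_description _ (H' i)); simpl; auto. }
    set (phi := nat_rect (fun _ => nat) N (fun _ r => nx r)).
    assert (HN : forall k, N <= phi k).
    { induction k; simpl. lia. destruct (Hnx _ IHk). unfold phi in *. simpl. lia. }
    assert (Hs1 : forall k, phi k < phi (Datatypes.S k) /\ le (s (phi k)) (s (phi (Datatypes.S k)))).
    { intro k. apply Hnx. apply HN. }
    exists phi. split. intro k; apply Hs1.
    intros k l Hkl. induction l. lia.
    destruct (Nat.eq_dec k l). subst; apply Hs1.
    apply trans with (s (phi l)). apply IHl; lia. apply Hs1.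
Qed.

Lemma prod_wqo : wqo SS le -> forall m, wqo (fun l => length l = m /\ Forall SS l) (Forall2 le).
Proof.
  intros W m. induction m; intros s Hs.
  - exists 0, 1. split. lia. destruct (Hs 0) as [H0 _]. destruct (Hs 1) as [H1 _].
    destruct (s 0); destruct (s 1); simpl in *; try discriminate. constructor.
  - destruct (Hs 0) as [H0 _]. destruct (s 0) as [|x0 t0] eqn:E; [simpl in H0; discriminate|].
    set (hs := fun i => hd x0 (s i)).
    set (ts := fun i => tl (s i)).
    assert (Hsplit : forall i, s i = hs i :: ts i).
    { intro i. destruct (Hs i) as [Hl _]. unfold hs, ts. destruct (s i); simpl in *; [discriminate|auto]. }
    assert (Hh : forall i, SS (hs i)).
    { intro i. destruct (Hs i) as [_ Hf]. rewrite Hsplit in Hf. inversion Hf; auto. }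
    destruct (chain_lemma W hs Hh) as [phi [Hphi Hch]].
    destruct (IHm (fun k => ts (phi k))) as [k [l [Hkl Hf2]]].
    + intro k. destruct (Hs (phi k)) as [Hl Hf]. rewrite Hsplit in Hl, Hf. simpl in Hl.
      inversion Hf; subst. split; auto.
    + exists (phi k), (phi l). split. apply incr_mono; auto.
      rewrite (Hsplit (phi k)), (Hsplit (phi l)). constructor; auto.
Qed.

Lemma tok_wqo : wqo SS le -> forall K : bool -> nat,
  wqo (fun t : bool * list X => length (snd t) = K (fst t) /\ Forall SS (snd t))
      (fun t t' => fst t = fst t' /\ Forall2 le (snd t) (snd t')).
Proof.
  intros W K s Hs.
  destruct (classic (forall N, exists i, N <= i /\ fst (s i) = true)) as [H|H].
  - destruct (subseq_lemma _ H) as [phi [Hphi Ht]].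
    destruct (prod_wqo W (K true) (fun k => snd (s (phi k)))) as [k [l [Hkl Hf]]].
    + intro k. destruct (Hs (phi k)). rewrite Ht in H0. auto.
    + exists (phi k), (phi l). split. apply incr_mono; auto. split; auto. rewrite !Ht; auto.
  - apply not_all_ex_not in H. destruct H as [N H].
    assert (Hf : forall i, fst (s (N + i)) = false).
    { intro i. destruct (fst (s (N+i))) eqn:E; auto. exfalso. apply H. exists (N+i). split; auto. lia. }
    destruct (prod_wqo W (K false) (fun k => snd (s (N + k)))) as [k [l [Hkl Hf2]]].
    + intro k. destruct (Hs (N + k)). rewrite Hf in H0. auto.
    + exists (N + k), (N + l). split. lia. split; auto. rewrite !Hf; auto.
Qed.
End Chain.

Section MBS.
Variable X : Type.
Variable SS : X -> Prop.
Variable le : X -> X -> Prop.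
Variable size : X -> nat.
Variable K : bool -> nat.
Variable C : bool -> list X -> X.
Hypothesis trans : forall x y z, le x y -> le y z -> le x z.
Hypothesis mono : forall g ys ys', Forall2 le ys ys' -> le (C g ys) (C g ys').
Hypothesis dec : forall x, SS x -> (forall y, SS y -> le x y) \/
   exists g ys, length ys = K g /\ x = C g ys /\ Forall (fun y => SS y /\ size y < size x /\ le y x) ys.

Definition bad (f : nat -> X) := (forall i, SS (f i)) /\ forall i j, i < j -> ~ le (f i) (f j).
Definition Ext n (p : nat -> X) := exists f, bad f /\ forall i, i < n -> f i = p i.
Definition upd (p : nat -> X) n x := fun i => if i <? n then p i else x.

Theorem mbs : wqo SS le.
Proof.
  apply NNPP; intro Hn. destruct (not_wqo_bad SS le Hn) as [f0 [Sf0 Bf0]].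
  set (d := f0 0).
  assert (choice : forall n p, exists x, Ext n p ->
     (Ext (Datatypes.S n) (upd p n x) /\ forall y, Ext (Datatypes.S n) (upd p n y) -> size x <= size y)).
  { intros n p. destruct (classic (Ext n p)) as [He|He].
    - destruct (minex (fun x => Ext (Datatypes.S n) (upd p n x)) size) as [x [Hx Hmin]].
      + destruct He as [f [Hb Hag]]. exists (f n). exists f. split; auto.
        intros i Hi. unfold upd. destruct (Nat.ltb_spec i n). apply Hag; auto.
        assert (i = n) by lia. subst; auto.
      + exists x. auto.
    - exists d. intro; contradiction. }
  set (ch := fun n p => proj1_sig (constructive_indefinite_description _ (choice n p))).
  assert (Hch : forall n p, Ext n p -> Ext (Datatypes.S n) (upd p n (ch n p)) /\
      forall y, Ext (Datatypes.S n) (upd p n y) -> size (ch n p) <= size y).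
  { intros n p. unfold ch. destruct (constructive_indefinite_description _ (choice n p)); simpl; auto. }
  set (pm := nat_rect (fun _ => nat -> X) (fun _ => d) (fun n p => upd p n (ch n p))).
  set (m := fun n => ch n (pm n)).
  assert (pmS : forall n, pm (Datatypes.S n) = upd (pm n) n (m n)) by reflexivity.
  assert (pm_st : forall n i, i < n -> pm n i = m i).
  { induction n; intros i Hi. lia. rewrite pmS. unfold upd. destruct (Nat.ltb_spec i n).
    apply IHn; auto. assert (i = n) by lia. subst; auto. }
  assert (Ext_pm : forall n, Ext n (pm n)).
  { induction n. exists f0. split. split; auto. intros; lia.
    rewrite pmS. apply Hch. auto. }
  assert (m_bad : bad m).
  { split.
    - intro i. destruct (Ext_pm (Datatypes.S i)) as [f [[Hs _] Hag]].
      rewrite <- pm_st with (n := Datatypes.S i) by lia. rewrite <- Hag by lia. auto.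
    - intros i j Hij. destruct (Ext_pm (Datatypes.S j)) as [f [[_ Hb] Hag]].
      rewrite <- (pm_st (Datatypes.S j) i) by lia. rewrite <- (pm_st (Datatypes.S j) j) by lia.
      rewrite <- !Hag by lia. auto. }
  assert (m_min : forall n y, Ext (Datatypes.S n) (upd (pm n) n y) -> size (m n) <= size y).
  { intros n y H. apply Hch; auto. }
  assert (Hdec : forall i, exists gy : bool * list X, length (snd gy) = K (fst gy) /\ m i = C (fst gy) (snd gy) /\
        Forall (fun y => SS y /\ size y < size (m i) /\ le y (m i)) (snd gy)).
  { intro i. destruct (dec (m i)) as [Hb|[g [ys H]]].
    - apply m_bad.
    - exfalso. destruct m_bad as [Hs Hb']. apply (Hb' i (Datatypes.S i)). lia. apply Hb. apply Hs.
    - exists (g, ys); auto. }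
  set (T := fun i => proj1_sig (constructive_indefinite_description _ (Hdec i))).
  assert (HT : forall i, length (snd (T i)) = K (fst (T i)) /\ m i = C (fst (T i)) (snd (T i)) /\
        Forall (fun y => SS y /\ size y < size (m i) /\ le y (m i)) (snd (T i))).
  { intro i. unfold T. destruct (constructive_indefinite_description _ (Hdec i)); simpl; auto. }
  set (Ch := fun y => exists i, In y (snd (T i))).
  assert (Wch : wqo Ch le).
  { apply NNPP; intro Hw. destruct (not_wqo_bad Ch le Hw) as [h [Hh Bh]].
    set (iota := fun k => proj1_sig (constructive_indefinite_description _ (Hh k))).
    assert (Hio : forall k, In (h k) (snd (T (iota k)))).
    { intro k. unfold iota. destruct (constructive_indefinite_description _ (Hh k)); simpl; auto. }
    assert (Hchild : forall k, SS (h k) /\ size (h k) < size (m (iota k)) /\ le (h k) (m (iota k))).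
    { intro k. destruct (HT (iota k)) as [_ [_ Hf]]. rewrite Forall_forall in Hf. apply Hf. apply Hio. }
    destruct (minex (fun _ : nat => True) iota) as [k0 [_ Hk0]]. exists 0; auto.
    set (i0 := iota k0).
    set (f' := fun j => if j <? i0 then m j else h (k0 + (j - i0))).
    assert (Hbad : bad f').
    { split.
      - intro j. unfold f'. destruct (Nat.ltb_spec j i0). apply m_bad. apply Hchild.
      - intros j j' Hjj'. unfold f'. destruct (Nat.ltb_spec j i0); destruct (Nat.ltb_spec j' i0).
        + apply m_bad; auto.
        + intro Hle. set (k := k0 + (j' - i0)).
          destruct (Hchild k) as [_ [_ Hl]].
          assert (Hik : i0 <= iota k) by (apply Hk0; auto).
          apply (proj2 m_bad j (iota k)). lia. eapply trans; eauto.
        + lia.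
        + apply Bh. lia. }
    assert (Hext : Ext (Datatypes.S i0) (upd (pm i0) i0 (h k0))).
    { exists f'. split; auto. intros i Hi. unfold f', upd. destruct (Nat.ltb_spec i i0).
      rewrite pm_st; auto. replace (k0 + (i - i0)) with k0 by lia. auto. }
    specialize (m_min _ _ Hext). destruct (Hchild k0) as [_ [Hsz _]]. fold i0 in Hsz. lia. }
  destruct (tok_wqo X Ch le trans Wch K T) as [i [j [Hij [Hg Hf]]]].
  - intro i. destruct (HT i) as [Hl [_ Hf]]. split; auto.
    rewrite Forall_forall. intros y Hy. exists i; auto.
  - apply (proj2 m_bad i j Hij).
    destruct (HT i) as [_ [Ei _]]. destruct (HT j) as [_ [Ej _]].
    rewrite Ei, Ej, Hg. apply mono. auto.
Qed.
End MBS.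

Fixpoint intl (s : letter) (l : list word) : word :=
  match l with
  | [] => []
  | y :: l' => match l' with [] => y | _ => y ++ s :: intl s l' end
  end.

Lemma intl_cons : forall s y l, l <> [] -> intl s (y :: l) = y ++ s :: intl s l.
Proof. intros s y l H. destruct l. congruence. reflexivity. Qed.

Lemma intl_mono : forall I s ys ys', Forall2 (star I) ys ys' -> star I (intl s ys) (intl s ys').
Proof.
  intros I s ys ys' H. induction H. apply rt_refl.
  destruct l as [|z l].
  - inversion H0; subst. simpl. auto.
  - inversion H0; subst. rewrite !intl_cons by discriminate.
    apply star_app; auto. apply (star_app I [s] [s]). apply rt_refl. auto.
Qed.

Record ctx := Ctx { cP : word; cs : letter; cQ : word; ck : nat }.
Definition capp (c : ctx) (ys : list word) : word := cP c ++ intl (cs c) ys ++ cQ c.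
Definition cpat (c : ctx) : word := cP c ++ pw (cs c) (ck c - 1) ++ cQ c.

Lemma capp_mono : forall I c ys ys', Forall2 (star I) ys ys' -> star I (capp c ys) (capp c ys').
Proof.
  intros. unfold capp. apply star_app. apply rt_refl. apply star_app. apply intl_mono; auto. apply rt_refl.
Qed.

Lemma intl_repeat : forall s k, intl s (repeat [] (S k)) = pw s k.
Proof. intros s k; induction k. reflexivity. change (repeat (@nil letter) (S (S k))) with ([] :: repeat (@nil letter) (S k)).
  rewrite intl_cons by discriminate. rewrite IHk. reflexivity. Qed.

Lemma intl_single : forall s i j y, intl s (repeat [] i ++ y :: repeat [] j) = pw s i ++ y ++ pw s j.
Proof.
  intros s i j y. induction i.
  - change (repeat (@nil letter) 0 ++ y :: repeat [] j) with (y :: repeat (@nil letter) j).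
    destruct j. simpl. rewrite app_nil_r; auto.
    rewrite intl_cons by discriminate. rewrite intl_repeat. reflexivity.
  - change (repeat (@nil letter) (S i) ++ y :: repeat [] j) with ([] :: (repeat (@nil letter) i ++ y :: repeat [] j)).
    rewrite intl_cons. rewrite IHi. reflexivity. destruct i; discriminate.
Qed.

Definition sumlen (l : list word) := fold_right (fun y n => length y + n) 0 l.

Lemma length_intl : forall s l, length (intl s l) = sumlen l + (length l - 1).
Proof.
  intros s l. induction l as [|y l IH]. reflexivity.
  destruct l. simpl. lia. rewrite intl_cons by discriminate. rewrite length_app. simpl in *. lia.
Qed.

Lemma In_sumlen : forall y l, In y l -> length y <= sumlen l.
Proof. intros y l H; induction l; simpl in *. contradiction. destruct H; subst; try lia. specialize (IHl H); lia. Qed.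

Lemma Forall2_rep : forall I ys, Forall (star I []) ys -> Forall2 (star I) (repeat [] (length ys)) ys.
Proof. intros I ys H; induction H; simpl; constructor; auto. Qed.

Lemma child_le : forall I c ys y, In (cpat c) I -> length ys = ck c -> Forall (star I []) ys -> In y ys ->
  star I y (capp c ys).
Proof.
  intros I c ys y HI Hl Hf Hy. apply in_split in Hy. destruct Hy as [l1 [l2 E]]. subst ys.
  apply rt_trans with (capp c (repeat [] (length l1) ++ y :: repeat [] (length l2))).
  - apply rt_step. unfold capp. rewrite intl_single.
    replace (cP c ++ (pw (cs c) (length l1) ++ y ++ pw (cs c) (length l2)) ++ cQ c)
      with ((cP c ++ pw (cs c) (length l1)) ++ y ++ (pw (cs c) (length l2) ++ cQ c)) by (rewrite !app_assoc; auto).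
    apply step_mid. unfold cpat in HI.
    replace (ck c - 1) with (length l1 + length l2) in HI by (rewrite length_app in Hl; simpl in Hl; lia).
    unfold pw in *. rewrite repeat_app in HI. rewrite <- !app_assoc in HI |- *. auto.
  - apply capp_mono. apply Forall_app in Hf. destruct Hf as [Hf1 Hf2]. inversion Hf2; subst.
    apply Forall2_app. apply Forall2_rep; auto. constructor. apply rt_refl. apply Forall2_rep; auto.
Qed.

Theorem generic (I : list word) (Pred : word -> Prop) (cg : bool -> ctx)
  (H1 : forall g, In (cpat (cg g)) I /\ 1 <= ck (cg g) /\ 1 <= length (cpat (cg g)))
  (H2 : forall w, Leps I w -> Pred w)
  (H3 : forall w, Pred w -> w <> [] -> exists g ys, length ys = ck (cg g) /\ w = capp (cg g) ys /\ Forall Pred ys) :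
  wqo (Leps I) (star I).
Proof.
  assert (Hsz : forall g ys y, length ys = ck (cg g) -> In y ys -> length y < length (capp (cg g) ys)).
  { intros g ys y Hl Hy. destruct (H1 g) as [_ [Hk Hp]]. unfold capp, cpat in *.
    rewrite !length_app in *. rewrite length_intl. apply In_sumlen in Hy. unfold pw in Hp. rewrite repeat_length in Hp. unfold word in *. lia. }
  assert (PL : forall w, Pred w -> Leps I w).
  { intro w. remember (length w) as n. revert w Heqn.
    induction n as [n IH] using (well_founded_induction lt_wf).
    intros w En Hw. destruct w as [|x w']. apply rt_refl.
    destruct (H3 _ Hw) as [g [ys [Hl [E Hf]]]]. discriminate.
    rewrite E. destruct (H1 g) as [HI [Hk _]].
    apply rt_trans with (capp (cg g) (repeat [] (length ys))).
    - apply rt_step. rewrite Hl. unfold capp. replace (ck (cg g)) with (S (ck (cg g) - 1)) by lia.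
      rewrite intl_repeat. apply step_sh. exists (cpat (cg g)). split; auto. apply sh_nil_l.
    - apply capp_mono. apply Forall2_rep. rewrite Forall_forall in *. intros y Hy.
      apply (IH (length y)). rewrite En, E. apply Hsz; auto. reflexivity. auto. }
  apply (mbs word (Leps I) (star I) (@length letter) (fun g => ck (cg g)) (fun g => capp (cg g))).
  - intros; eapply rt_trans; eauto.
  - intros; apply capp_mono; auto.
  - intros x Hx. destruct x as [|x0 x'].
    + left. intros y Hy. exact Hy.
    + right. destruct (H3 _ (H2 _ Hx)) as [g [ys [Hl [E Hf]]]]. discriminate.
      exists g, ys. split; auto. split; auto.
      assert (HL : Forall (star I []) ys). { rewrite Forall_forall in *. intros; apply PL; auto. }
      rewrite Forall_forall. intros y Hy. split. rewrite Forall_forall in HL; apply HL; auto.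
      split. rewrite E. apply Hsz; auto.
      rewrite E. apply child_le; auto. apply H1.
Qed.
Open Scope Z_scope.

Definition st (al be : Z) (c : letter) : Z := match c with a => al | b => - be end.
Fixpoint lv (al be : Z) (w : word) : Z :=
  match w with [] => 0 | c :: w' => st al be c + lv al be w' end.
Fixpoint Pos (al be : Z) (h : Z) (w : word) : Prop :=
  match w with [] => True | c :: w' => 0 <= h + st al be c /\ Pos al be (h + st al be c) w' end.
Definition PredG al be md w := Pos al be 0 w /\ (md | lv al be w).

Section Paths.
Variables al be : Z.
Hypothesis Hal : 0 <= al.
Hypothesis Hbe : 0 <= be.

Lemma lv_app : forall u v, lv al be (u ++ v) = lv al be u + lv al be v.
Proof. induction u; intros; simpl; try rewrite IHu; lia. Qed.

Lemma Pos_app : forall u v h, Pos al be h (u ++ v) <-> Pos al be h u /\ Pos al be (h + lv al be u) v.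
Proof.
  induction u as [|c u IHu]; intros v h; simpl.
  - replace (h + 0) with h by lia. tauto.
  - rewrite IHu. replace (h + st al be c + lv al be u) with (h + (st al be c + lv al be u)) by lia. tauto.
Qed.

Lemma Pos_mono : forall w h h', Pos al be h w -> h <= h' -> Pos al be h' w.
Proof. induction w; intros h h' H Hle; simpl in *; auto. destruct H. split. lia. eapply IHw; eauto. lia. Qed.

Lemma Pos_eq : forall w h h', Pos al be h w -> h = h' -> Pos al be h' w.
Proof. intros; subst; auto. Qed.

Lemma Pos_last : forall w h, 0 <= h -> Pos al be h w -> 0 <= h + lv al be w.
Proof. induction w; intros h Hh H; simpl in *. lia. destruct H. specialize (IHw _ H H0). lia. Qed.

Lemma sh_lv : forall u v w, sh u v w -> lv al be w = lv al be u + lv al be v.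
Proof. intros u v w H; induction H; simpl; lia. Qed.

Lemma sh_Pos : forall u v w, sh u v w -> forall h1 h2, 0 <= h1 -> 0 <= h2 ->
  Pos al be h1 u -> Pos al be h2 v -> Pos al be (h1 + h2) w.
Proof.
  intros u v w H; induction H; intros h1 h2 H1 H2 Pu Pv; simpl in *; auto.
  - destruct Pu. split. lia. apply Pos_eq with (h1 + st al be c + h2). apply IHsh; auto. lia.
  - destruct Pv. split. lia. apply Pos_eq with (h1 + (h2 + st al be c)). apply IHsh; auto. lia.
Qed.

Lemma Pos_snoc : forall w c h, Pos al be h (w ++ [c]) <-> Pos al be h w /\ 0 <= h + lv al be w + st al be c.
Proof. intros. rewrite Pos_app. simpl. tauto. Qed.

Lemma H2gen : forall (I : list word) md, (forall u, In u I -> PredG al be md u) ->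
  forall w, Leps I w -> PredG al be md w.
Proof.
  intros I md HI w H. unfold Leps, star in H. apply clos_rt_rtn1_iff in H.
  induction H.
  - split. simpl; auto. simpl. apply Z.divide_0_r.
  - apply step_sh in H. destruct H as [u [Hu Hs]]. destruct (HI u Hu) as [Pu Du]. destruct IHclos_refl_trans_n1 as [Py Dy].
    split. apply Pos_eq with (0 + 0). apply sh_Pos with y u; auto; lia. lia.
    rewrite (sh_lv _ _ _ Hs). apply Z.divide_add_r; auto.
Qed.

Lemma Pos_pw_a : forall n h, 0 <= h -> Pos al be h (pw a n).
Proof. unfold pw. induction n; intros h Hh; simpl; auto. split. lia. apply IHn. lia. Qed.

Lemma lv_pw : forall c n, lv al be (pw c n) = Z.of_nat n * st al be c.
Proof. unfold pw. intros c n; induction n. simpl; lia. rewrite Nat2Z.inj_succ. simpl. rewrite IHn. ring. Qed.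

Lemma Pos_pw_b : forall n h, Z.of_nat n * be <= h -> Pos al be h (pw b n).
Proof. unfold pw. induction n; intros h Hh; simpl; auto. split. lia. apply IHn. lia. Qed.

Lemma intl_snoc : forall s l v, l <> [] -> intl s (l ++ [v]) = intl s l ++ s :: v.
Proof.
  intros s l v. induction l as [|y l IH]; intros H. congruence.
  destruct l as [|z l]. reflexivity.
  assert (E1 : (y :: z :: l) ++ [v] = y :: ((z :: l) ++ [v])) by reflexivity.
  rewrite E1. rewrite intl_cons by (simpl; discriminate). rewrite IH by discriminate.
  rewrite (intl_cons s y (z::l)) by discriminate. rewrite <- app_assoc. reflexivity.
Qed.

Lemma intl_last : forall s l x y, intl s (l ++ [x]) ++ y = intl s (l ++ [x ++ y]).
Proof.
  intros s l x y. induction l as [|z l IH]. reflexivity.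
  assert (E1 : forall t, (z :: l) ++ [t] = z :: (l ++ [t])) by reflexivity.
  rewrite !E1. rewrite !intl_cons by (destruct l; simpl; discriminate).
  rewrite <- app_assoc. simpl. f_equal. f_equal. exact IH.
Qed.

Lemma intl_flat : forall s l1 l2, l2 <> [] -> intl s (l1 ++ [intl s l2]) = intl s (l1 ++ l2).
Proof.
  intros s l1 l2 H. induction l1 as [|y l1 IH]. reflexivity.
  assert (E1 : forall t, (y :: l1) ++ t = y :: (l1 ++ t)) by reflexivity.
  rewrite !E1. rewrite !intl_cons. rewrite IH. reflexivity.
  destruct l1; destruct l2; simpl; try discriminate; congruence.
  destruct l1; simpl; discriminate.
Qed.
End Paths.

Section AC.
Variable be : Z.
Hypothesis Hbe : 0 <= be.

Lemma LP : forall w (m j : Z), 0 <= m -> 0 <= j -> Pos 1 be 0 w -> lv 1 be w = m + 1 + j ->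
  exists u v, w = u ++ a :: v /\ Pos 1 be 0 u /\ lv 1 be u = m /\ Pos 1 be 0 v /\ lv 1 be v = j.
Proof.
  intros w. induction w as [|c w IH] using rev_ind; intros m j Hm Hj HP Hl.
  - simpl in Hl. lia.
  - rewrite lv_app in Hl. apply Pos_snoc in HP; try lia. destruct HP as [HP1 HP2].
    destruct c; simpl in Hl, HP2.
    + destruct (Z.eq_dec j 0).
      * subst. exists w, []. repeat split; auto. lia.
      * destruct (IH m (j-1)) as [u [v [E [Pu [Lu [Pv Lv]]]]]]; auto; try lia.
        exists u, (v ++ [a]). subst w. split. rewrite <- app_assoc. reflexivity.
        repeat split; auto. apply Pos_snoc; try lia. split; auto. simpl. lia.
        rewrite lv_app. simpl. lia.
    + destruct (IH m (j + be)) as [u [v [E [Pu [Lu [Pv Lv]]]]]]; auto; try lia.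
      exists u, (v ++ [b]). subst w. split. rewrite <- app_assoc. reflexivity.
      repeat split; auto. apply Pos_snoc; try lia. split; auto. simpl. lia.
      rewrite lv_app. simpl. lia.
Qed.

Lemma LPn : forall (k : nat) w m, 0 <= m -> Pos 1 be 0 w -> lv 1 be w = m + Z.of_nat k ->
  exists y0 ys, length ys = k /\ w = intl a (y0 :: ys) /\ Pos 1 be 0 y0 /\ lv 1 be y0 = m /\
    Forall (fun y => Pos 1 be 0 y /\ lv 1 be y = 0) ys.
Proof.
  induction k; intros w m Hm HP Hl.
  - exists w, []. repeat split; auto. lia.
  - destruct (LP w (m + Z.of_nat k) 0) as [u [v [E [Pu [Lu [Pv Lv]]]]]]; auto; try lia.
    destruct (IHk u m) as [y0 [ys [Hlen [Eu [P0 [L0 Hf]]]]]]; auto; try lia.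
    exists y0, (ys ++ [v]). split. rewrite length_app; simpl; lia.
    split. rewrite E, Eu. rewrite app_comm_cons. rewrite intl_snoc. reflexivity. discriminate.
    repeat split; auto. apply Forall_app; split; auto.
Qed.
End AC.

Definition cgA (n : nat) (g : bool) : ctx := if g then Ctx [] a [b] (S n) else Ctx [] a [a] 1.
Definition cgC (n : nat) (g : bool) : ctx :=
  if orb g (Nat.eqb n 0) then Ctx [] a [b] (S n) else Ctx [] a [] (S n).

Lemma decAC : forall (n : nat) (md : Z), (md | Z.of_nat n) -> forall w,
  PredG 1 (Z.of_nat n) md w -> w <> [] ->
  (exists w', w = w' ++ [a]) \/
  exists ys, length ys = S n /\ w = intl a ys ++ [b] /\ Forall (PredG 1 (Z.of_nat n) md) ys.
Proof.
  intros n md Hmd w [HP HD] Hne. destruct (exists_last Hne) as [w' [c E]]. subst w.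
  destruct c. left; eauto. right.
  apply Pos_snoc in HP; try lia. destruct HP as [HP1 HP2]. simpl in HP2.
  destruct (LPn (Z.of_nat n) ltac:(lia) n w' (lv 1 (Z.of_nat n) w' - Z.of_nat n)) as [y0 [ys [Hl [E [P0 [L0 Hf]]]]]]; auto; try lia.
  exists (y0 :: ys). split. simpl; lia. split. rewrite E; reflexivity.
  constructor. split; auto. rewrite L0. rewrite lv_app in HD. simpl in HD.
  replace (lv 1 (Z.of_nat n) w' - Z.of_nat n) with (lv 1 (Z.of_nat n) w' + (- Z.of_nat n + 0)) by lia. auto.
  eapply Forall_impl; [|exact Hf]. intros y [Py Ly]. split; auto. rewrite Ly. apply Z.divide_0_r.
Qed.
Open Scope Z_scope.

Lemma Pos_one : forall al be h c, Pos al be h [c] <-> 0 <= h + st al be c.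
Proof. intros; simpl; tauto. Qed.

Theorem caseA : forall n : nat, wqo (Leps [pw a n ++ [b]; [a]]) (star [pw a n ++ [b]; [a]]).
Proof.
  intro n. apply generic with (Pred := PredG 1 (Z.of_nat n) 1) (cg := cgA n).
  - intros [|]; unfold cpat; simpl; rewrite ?Nat.sub_0_r.
    + split. auto. split. lia. rewrite length_app; simpl; lia.
    + split. auto. simpl; lia.
  - apply H2gen; try lia. intros u [Hu|[Hu|[]]]; subst; split.
    + apply Pos_app; try lia. split. apply Pos_pw_a; lia. rewrite lv_pw. simpl. lia.
    + apply Z.divide_1_l.
    + simpl; lia.
    + apply Z.divide_1_l.
  - intros w Hw Hne. destruct (decAC n 1 (Z.divide_1_l _) w Hw Hne) as [[w' E]|[ys [Hl [E Hf]]]].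
    + exists false, [w']. simpl. split. reflexivity. split. subst; reflexivity.
      constructor; [|constructor]. split. destruct Hw as [HP _]. subst. apply Pos_app in HP; try lia. tauto.
      apply Z.divide_1_l.
    + exists true, ys. split. exact Hl. split. rewrite E. reflexivity. exact Hf.
Qed.

Theorem caseC : forall n : nat, wqo (Leps [pw a n ++ [b]; pw a n]) (star [pw a n ++ [b]; pw a n]).
Proof.
  intro n. apply generic with (Pred := PredG 1 (Z.of_nat n) (Z.of_nat n)) (cg := cgC n).
  - intros [|]; unfold cgC, cpat; simpl.
    + rewrite ?Nat.sub_0_r. split. auto. split. lia. rewrite length_app; simpl; lia.
    + destruct (Nat.eqb_spec n 0); simpl; rewrite ?Nat.sub_0_r.
      * split. auto. split. lia. rewrite length_app; simpl; lia.
      * rewrite app_nil_r. split. auto. split. lia. unfold pw; rewrite repeat_length; lia.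
  - apply H2gen; try lia. intros u [Hu|[Hu|[]]]; subst; split.
    + apply Pos_app; try lia. split. apply Pos_pw_a; lia. rewrite lv_pw. simpl. lia.
    + rewrite lv_app, lv_pw. simpl. replace (Z.of_nat n * 1 + (- Z.of_nat n + 0)) with 0 by lia. apply Z.divide_0_r.
    + apply Pos_pw_a; lia.
    + rewrite lv_pw. simpl. rewrite Z.mul_1_r. apply Z.divide_refl.
  - intros w Hw Hne. destruct (decAC n (Z.of_nat n) (Z.divide_refl _) w Hw Hne) as [[w' E]|[ys [Hl [E Hf]]]].
    + destruct Hw as [HP HD]. subst w.
      assert (Hl1 : 1 <= lv 1 (Z.of_nat n) (w' ++ [a])).
      { rewrite lv_app. simpl. apply Pos_app in HP; try lia. destruct HP as [HP _].
        pose proof (Pos_last 1 (Z.of_nat n) w' 0 ltac:(lia) HP). lia. }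
      assert (Hn0 : n <> 0%nat).
      { intro; subst. change (Z.of_nat 0) with 0 in *. apply Z.divide_0_l in HD. lia. }
      assert (Hge : Z.of_nat n <= lv 1 (Z.of_nat n) (w' ++ [a])).
      { apply Z.divide_pos_le; auto; lia. }
      destruct (LPn (Z.of_nat n) ltac:(lia) n (w' ++ [a]) (lv 1 (Z.of_nat n) (w' ++ [a]) - Z.of_nat n))
        as [y0 [ys [Hl [E [P0 [L0 Hf]]]]]]; auto; try lia.
      exists false, (y0 :: ys). unfold cgC. destruct (Nat.eqb_spec n 0); [contradiction|]. simpl.
      split. lia. split. unfold capp. simpl. rewrite app_nil_r. exact E.
      constructor. split; auto. rewrite L0. apply Z.divide_sub_r; auto. apply Z.divide_refl.
      eapply Forall_impl; [|exact Hf]. intros y [Py Ly]. split; auto. rewrite Ly. apply Z.divide_0_r.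
    + exists true, ys. split. exact Hl. split. rewrite E. reflexivity. exact Hf.
Qed.
Open Scope Z_scope.

Lemma FP1 : forall al, 0 <= al -> forall R h, 0 <= h -> ~ Pos al 1 h R ->
  exists V R', R = V ++ b :: R' /\ Pos al 1 h V /\ h + lv al 1 V = 0.
Proof.
  intros al Hal. induction R as [|c R IH]; intros h Hh HP. simpl in HP; tauto. simpl in HP.
  destruct (Z_lt_le_dec (h + st al 1 c) 0) as [Hl|Hl].
  - destruct c; simpl in Hl. lia. exists [], R. simpl. split; auto. split; auto. lia.
  - assert (HP' : ~ Pos al 1 (h + st al 1 c) R) by tauto.
    destruct (IH _ Hl HP') as [V [R' [E [PV LV]]]]. exists (c :: V), R'.
    split. subst; reflexivity. split. simpl. split; auto. simpl. lia.
Qed.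

Lemma FPn : forall al, 0 <= al -> forall (d : nat) R, Pos al 1 (Z.of_nat d) R ->
  exists Vs T, (length Vs <= d)%nat /\ R = intl b (Vs ++ [T]) /\
    Forall (fun V => Pos al 1 0 V /\ lv al 1 V = 0) Vs /\ Pos al 1 0 T /\
    lv al 1 R = lv al 1 T - Z.of_nat (length Vs).
Proof.
  intros al Hal. induction d; intros R HR; destruct (classic (Pos al 1 0 R)) as [H0|H0].
  - exists [], R. simpl. repeat split; auto; try lia.
  - change (Z.of_nat 0) with 0 in HR. contradiction.
  - exists [], R. simpl. repeat split; auto; try lia.
  - destruct (FP1 al Hal R 0 ltac:(lia) H0) as [V [R1 [E [PV LV]]]].
    rewrite E in HR. apply Pos_app in HR. destruct HR as [_ HR]. destruct HR as [_ HR].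
    change (st al 1 b) with (-(1)) in HR.
    destruct (IHd R1) as [Vs [T [Hl [E1 [Hf [PT LT]]]]]].
    { eapply Pos_eq. exact HR. lia. }
    exists (V :: Vs), T. split. simpl; lia.
    split. rewrite E. change ((V :: Vs) ++ [T]) with (V :: (Vs ++ [T])).
    rewrite intl_cons by (destruct Vs; simpl; discriminate). f_equal. f_equal. exact E1.
    split. constructor; auto. split; auto.
    rewrite E, lv_app. change (lv al 1 (b :: R1)) with (-(1) + lv al 1 R1). rewrite LT. change (length (V :: Vs)) with (S (length Vs)). rewrite Nat2Z.inj_succ. lia.
Qed.

Lemma SPLIT : forall (n : nat) T (j : nat), (j < n)%nat -> Pos (Z.of_nat n) 1 0 T ->
  (Z.of_nat n | lv (Z.of_nat n) 1 T + Z.of_nat j) ->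
  exists Zs Zl, length Zs = j /\ T = intl b (Zs ++ [Zl]) /\
    Forall (PredG (Z.of_nat n) 1 (Z.of_nat n)) (Zs ++ [Zl]).
Proof.
  intros n T. induction T as [|c T IH] using rev_ind; intros j Hj HP HD.
  - destruct j.
    + exists [], []. split; auto. split; auto. constructor; [|constructor]. split. simpl; auto. apply Z.divide_0_r.
    + simpl in HD. apply Z.divide_pos_le in HD; lia.
  - apply Pos_snoc in HP. destruct HP as [HP1 HP2]. rewrite lv_app in HD. destruct c; simpl in HD, HP2.
    + destruct (IH j Hj HP1) as [Zs [Zl [Hl [E Hf]]]].
      { replace (lv (Z.of_nat n) 1 T + Z.of_nat j) with ((lv (Z.of_nat n) 1 T + (Z.of_nat n + 0) + Z.of_nat j) - Z.of_nat n) by lia.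
        apply Z.divide_sub_r; auto. apply Z.divide_refl. }
      exists Zs, (Zl ++ [a]). split; auto. split. rewrite E. apply intl_last.
      apply Forall_app in Hf. destruct Hf as [Hf1 Hf2]. inversion Hf2 as [|? ? [PZ DZ]]; subst.
      apply Forall_app. split; auto. constructor; [|constructor]. split.
      apply Pos_snoc. split; auto. simpl. pose proof (Pos_last _ _ Zl 0 ltac:(lia) PZ). lia.
      rewrite lv_app. simpl. replace (lv (Z.of_nat n) 1 Zl + (Z.of_nat n + 0)) with (lv (Z.of_nat n) 1 Zl + Z.of_nat n) by lia.
      apply Z.divide_add_r; auto. apply Z.divide_refl.
    + destruct j.
      * exists [], (T ++ [b]). split; auto. split; auto. constructor; [|constructor]. split.
        apply Pos_snoc. split; auto. rewrite lv_app. simpl. simpl in HD. rewrite Z.add_0_r in HD. auto.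
      * destruct (IH j ltac:(lia) HP1) as [Zs [Zl [Hl [E Hf]]]].
        { replace (lv (Z.of_nat n) 1 T + Z.of_nat j) with (lv (Z.of_nat n) 1 T + (-1 + 0) + Z.of_nat (S j)) by lia. auto. }
        exists (Zs ++ [Zl]), []. split. rewrite length_app; simpl; lia.
        split. rewrite E. rewrite (intl_snoc b (Zs ++ [Zl]) []). reflexivity. destruct Zs; simpl; discriminate.
        apply Forall_app. split; auto. constructor; [|constructor]. split. simpl; auto. apply Z.divide_0_r.
Qed.

Definition cgB (n : nat) (g : bool) : ctx := if g then Ctx [a] b [] (S n) else Ctx [a] b [] 1.

Theorem caseB : forall n : nat, wqo (Leps [[a] ++ pw b n; [a]]) (star [[a] ++ pw b n; [a]]).
Proof.
  intro n. apply generic with (Pred := PredG (Z.of_nat n) 1 (Z.of_nat n)) (cg := cgB n).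
  - intros [|]; unfold cgB, cpat; simpl; rewrite ?Nat.sub_0_r, ?app_nil_r.
    + split. auto. split. lia. simpl; lia.
    + split. auto. simpl; lia.
  - apply H2gen. intros u [Hu|[Hu|[]]]; subst; split.
    + simpl. split. lia. apply Pos_pw_b; lia.
    + simpl. rewrite lv_pw. simpl. replace (Z.of_nat n + Z.of_nat n * -1) with 0 by lia. apply Z.divide_0_r.
    + simpl. split; auto; lia.
    + simpl. rewrite Z.add_0_r. apply Z.divide_refl.
  - intros w [HP HD] Hne. destruct w as [|c R]. congruence.
    destruct c; simpl in HP; destruct HP as [Hc HP]; [|lia].
    simpl in HD.
    destruct (classic (Pos (Z.of_nat n) 1 0 R)) as [H0|H0].
    + exists false, [R]. split. reflexivity. split. unfold capp; simpl; rewrite app_nil_r; reflexivity.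
      constructor; [|constructor]. split; auto.
      replace (lv (Z.of_nat n) 1 R) with ((Z.of_nat n + lv (Z.of_nat n) 1 R) - Z.of_nat n) by lia.
      apply Z.divide_sub_r; auto. apply Z.divide_refl.
    + destruct (FPn (Z.of_nat n) ltac:(lia) n R) as [Vs [T [Hl [E [Hf [PT LT]]]]]].
      { eapply Pos_eq. exact HP. lia. }
      assert (Hne' : Vs <> []). { intro; subst. simpl in H0. contradiction. }
      destruct (SPLIT n T (n - length Vs)) as [Zs [Zl [HlZ [EZ HfZ]]]]; auto.
      { destruct Vs; [congruence|simpl in Hl |- *; lia]. }
      { replace (lv (Z.of_nat n) 1 T + Z.of_nat (n - length Vs)) with (Z.of_nat n + lv (Z.of_nat n) 1 R) by lia. auto. }
      exists true, (Vs ++ Zs ++ [Zl]). split.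
      { simpl. rewrite !length_app. simpl. lia. }
      split.
      { unfold capp; simpl. rewrite app_nil_r. rewrite E, EZ. rewrite intl_flat. reflexivity. destruct Zs; simpl; discriminate. }
      apply Forall_app. split; auto. eapply Forall_impl; [|exact Hf]. intros V [PV LV]. split; auto. rewrite LV. apply Z.divide_0_r.
Qed.
Close Scope Z_scope.

Definition swp (c : letter) : letter := match c with a => b | b => a end.
Definition fS (w : word) : word := map swp w.
Definition fR (w : word) : word := rev w.
Definition fB (w : word) : word := map swp (rev w).

Lemma rev_pw : forall x n, rev (pw x n) = pw x n.
Proof. intros x n; unfold pw; induction n. reflexivity. simpl. rewrite IHn.
  change [x] with (repeat x 1). rewrite <- repeat_app. rewrite Nat.add_comm. reflexivity. Qed.
Lemma map_pw : forall x n, map swp (pw x n) = pw (swp x) n.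
Proof. intros; unfold pw; apply map_repeat. Qed.

Lemma swp_inv : forall w, map swp (map swp w) = w.
Proof. induction w as [|c w IH]; simpl; auto. rewrite IH. destruct c; reflexivity. Qed.

Lemma tS : forall I, wqo (Leps I) (star I) -> wqo (Leps (map fS I)) (star (map fS I)).
Proof. intros. apply wqo_transport; auto. intros; apply sh_map; auto. intros; apply swp_inv. Qed.
Lemma tR : forall I, wqo (Leps I) (star I) -> wqo (Leps (map fR I)) (star (map fR I)).
Proof. intros. apply wqo_transport; auto. intros; apply sh_rev; auto. intros; apply rev_involutive. Qed.
Lemma tB : forall I, wqo (Leps I) (star I) -> wqo (Leps (map fB I)) (star (map fB I)).
Proof. intros. apply wqo_transport; auto. intros; apply sh_map, sh_rev; auto.
  intros; unfold fB. repeat (rewrite ?map_rev, ?rev_involutive, ?swp_inv). reflexivity. Qed.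

Ltac eqI := unfold fS, fR, fB; simpl; rewrite ?rev_app_distr, ?map_app, ?rev_pw, ?map_pw; reflexivity.

Theorem proposition6 (n : nat) (I : list word) :
  In I (Isets n) -> wqo (Leps I) (star I).
Proof.
  intro H. unfold Isets in H. simpl in H.
  repeat (destruct H as [H|H]; [subst I|]); try contradiction.
  - apply caseA.
  - replace [pw a n ++ [b]; [b]] with (map fB [[a] ++ pw b n; [a]]) by eqI. apply tB, caseB.
  - replace [pw b n ++ [a]; [a]] with (map fR [[a] ++ pw b n; [a]]) by eqI. apply tR, caseB.
  - replace [pw b n ++ [a]; [b]] with (map fS [pw a n ++ [b]; [a]]) by eqI. apply tS, caseA.
  - replace [b :: pw a n; [a]] with (map fR [pw a n ++ [b]; [a]]) by eqI. apply tR, caseA.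
  - replace [b :: pw a n; [b]] with (map fS [[a] ++ pw b n; [a]]) by eqI. apply tS, caseB.
  - apply caseB.
  - replace [a :: pw b n; [b]] with (map fB [pw a n ++ [b]; [a]]) by eqI. apply tB, caseA.
  - apply caseC.
  - replace [b :: pw a n; pw a n] with (map fR [pw a n ++ [b]; pw a n]) by eqI. apply tR, caseC.
  - replace [pw b n ++ [a]; pw b n] with (map fS [pw a n ++ [b]; pw a n]) by eqI. apply tS, caseC.
  - replace [a :: pw b n; pw b n] with (map fB [pw a n ++ [b]; pw a n]) by eqI. apply tB, caseC.
Qed.
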